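(* Let $1\le a\le\sqrt3$, $c(a)=\frac98\left(a+\frac1a\right)$, and for $K> c(a)^2/9$ put $\alpha=\frac12\left(3-3a^2+\sqrt{9a^4-4c(a)a^3+4Ka^2}\right)$, $\beta=\frac12\left(3-3a^2-\sqrt{9a^4-4c(a)a^3+4Ka^2}\right)$, $\gamma=\sqrt{Ka^2-c(a)a+9/4}$, and $$T(K,a)=\int_\alpha^\gamma\frac{4a\,ds}{\sqrt{(s-\alpha)(s-\beta)}\sqrt{\gamma^2-s^2}}.$$ Then $\lim_{K\to\infty}T(K,a)=0$.
   Context: $T(K,a)$ is the period of the closed solutions of the Lie–Poisson equation for chains on $\mathrm{SU}(2)$ with left-invariant CR structure parameter $a$ lying on the sphere of radius $\sqrt K$; here it is given by the explicit integral above. *)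

(* Defs.v *)
From HB Require Import structures.
From mathcomp Require Import all_boot all_order all_algebra.
From mathcomp Require Import all_classical all_reals all_analysis.
Set Implicit Arguments. Unset Strict Implicit. Unset Printing Implicit Defensive.
Import Order.TTheory GRing.Theory Num.Theory.
Import numFieldNormedType.Exports.
Local Open Scope classical_set_scope.
Local Open Scope ring_scope.

Definition cA {R : realType} (a : R) : R := 9 / 8 * (a + a^-1).

Definition discr {R : realType} (K a : R) : R :=
  9 * a ^+ 4 - 4 * cA a * a ^+ 3 + 4 * K * a ^+ 2.

Definition alphaK {R : realType} (K a : R) : R :=
  (3 - 3 * a ^+ 2 + Num.sqrt (discr K a)) / 2.

Definition betaK {R : realType} (K a : R) : R :=
  (3 - 3 * a ^+ 2 - Num.sqrt (discr K a)) / 2.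

Definition gammaK {R : realType} (K a : R) : R :=
  Num.sqrt (K * a ^+ 2 - cA a * a + 9 / 4).

Definition integrandT {R : realType} (K a s : R) : R :=
  4 * a / (Num.sqrt ((s - alphaK K a) * (s - betaK K a))
           * Num.sqrt (gammaK K a ^+ 2 - s ^+ 2)).

(* The period T(K,a), as a (possibly improper) Lebesgue integral of the
   nonnegative integrand over [alpha, gamma], valued in the extended reals. *)
Definition periodT {R : realType} (K a : R) : \bar R :=
  (\int[@lebesgue_measure R]_(s in `[alphaK K a, gammaK K a]) (integrandT K a s)%:E)%E.

(* Main.v *)
Require Import Defs.
From HB Require Import structures.
From mathcomp Require Import all_boot all_order all_algebra.
From mathcomp Require Import all_classical all_reals all_analysis.
From mathcomp Require Import measurable_realfun.
From mathcomp Require Import ring lra.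
Import Order.TTheory GRing.Theory Num.Theory.
Import numFieldNormedType.Exports.
Local Open Scope classical_set_scope.
Local Open Scope ring_scope.

Lemma le_int_nm d (T : measurableType d) (R : realType) (mu : {measure set T -> \bar R})
  (D : set T) (f g : T -> \bar R) :
  (forall x, D x -> (0 <= f x)%E) -> (forall x, D x -> (f x <= g x)%E) ->
  (\int[mu]_(x in D) f x <= \int[mu]_(x in D) g x)%E.
Proof.
move=> f0 fg.
have g0 : forall x, D x -> (0 <= g x)%E by move=> x Dx; exact: le_trans (f0 _ Dx) (fg _ Dx).
rewrite (ge0_integralE _ f0) (ge0_integralE _ g0) /=.
apply: ereal_sup_le => _ [h hf <-]; exists h => //= x.
apply: le_trans (hf x) _; rewrite /patch; case: ifP => // /set_mem; exact: fg.
Qed.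

Definition hh {R : realType} (u v x : R) : R := (Num.sqrt ((x - u) * (v - x)))^-1.

Lemma hh_deriv {R : realType} (u v x : R) : u < x -> x < v ->
  is_derive x 1 (fun y => asin ((2 * y - u - v) / (v - u))) (hh u v x).
Proof.
move=> ux xv.
have uv : u < v by apply: lt_trans ux xv.
have w0 : 0 < v - u by rewrite subr_gt0.
set phi := fun y : R => (2 * y - u - v) / (v - u).
have dphi : is_derive x 1 phi (2 / (v - u)).
  have wn0 : v - u != 0 by rewrite gt_eqF.
  have -> : phi = (fun y => (2/(v-u)) * y + (- (u+v)/(v-u))).
    by apply/funext=> y; rewrite /phi; field.
  have h := @is_deriveD R R R (fun y => (2/(v-u)) * y) (cst (- (u+v)/(v-u))) x 1 (2/(v-u)) 0.
  have hm : is_derive x (1:R) (fun y : R => 2 / (v - u) * y) (2/(v-u)).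
    apply: is_derive_eq.
    exact: mulr1.
  have h' := h hm (is_derive_cst _ _ _).
  rewrite addr0 in h'; exact: h'.
have h1 : -1 < phi x < 1.
  rewrite /phi ltr_pdivlMr // ltr_pdivrMr //; apply/andP; split; lra.
have := is_derive1_comp (is_derive1_asin h1) dphi.
rewrite /phi => H. apply: (is_derive_eq H).
have wn0 : v - u != 0 by rewrite gt_eqF.
have E : 1 - ((2 * x - u - v) / (v - u)) ^+ 2 = (2 / (v - u)) ^+ 2 * ((x - u) * (v - x)).
  by field.
have P0 : 0 < (x - u) * (v - x) by apply: mulr_gt0; rewrite subr_gt0.
have c0 : 0 < 2 / (v - u) by apply: divr_gt0.
rewrite E sqrtrM ?sqr_ge0 // sqrtr_sqr gtr0_norm // /hh.
have s0 : Num.sqrt ((x - u) * (v - x)) != 0 by rewrite gt_eqF // sqrtr_gt0.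
by field; rewrite s0 gt_eqF.
Qed.

Lemma hh_cont {R : realType} (u v x : R) : u < x -> x < v ->
  {for x, continuous (fun y => hh u v y)}.
Proof.
move=> ux xv.
have P0 : 0 < (x - u) * (v - x) by apply: mulr_gt0; rewrite subr_gt0.
apply: continuousV; first by rewrite gt_eqF // sqrtr_gt0.
apply: (@continuous_comp _ _ _ (fun y : R => (y - u) * (v - y)) Num.sqrt).
  apply: continuousM; apply: continuousB.
  - exact: cvg_id.
  - exact: cvg_cst.
  - exact: cvg_cst.
  - exact: cvg_id.
exact: sqrt_continuous.
Qed.

Lemma ftc_piece (R : realType) (u v p q M : R) : 0 <= M -> u < p -> p < q -> q < v ->
  (\int[lebesgue_measure]_(x in `[p, q]) (M * hh u v x)%:E <= (M * pi)%:E)%E.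
Proof.
move=> M0 up pq qv.
pose F := fun y : R => M * asin ((2 * y - u - v) / (v - u)).
have dF : forall y, u < y -> y < v -> is_derive y (1:R) F (M * hh u v y).
  move=> y uy yv; have := is_deriveZ M (hh_deriv _ _ _ uy yv).
  move=> H; exact: (is_derive_eq H).
have Fc : forall y, u < y -> y < v -> {for y, continuous F}.
  move=> y uy yv; apply/differentiable_continuous/derivable1_diffP.
  exact: (@ex_derive _ _ _ _ _ _ _ (dF y uy yv)).
rewrite (@continuous_FTC2 R (fun x => M * hh u v x) F p q pq).
- rewrite -EFinB lee_fin /F -mulrBr ler_wpM2l //.
  have uv : u < v by apply: lt_trans up (lt_trans pq qv).
  have w0 : 0 < v - u by rewrite subr_gt0.
  have i1 : -1 <= (2 * q - u - v) / (v - u) <= 1.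
    rewrite ler_pdivlMr // ler_pdivrMr //; apply/andP; split; lra.
  have i2 : -1 <= (2 * p - u - v) / (v - u) <= 1.
    rewrite ler_pdivlMr // ler_pdivrMr //; apply/andP; split; lra.
  have := asin_lepi2 i1; have := asin_geNpi2 i2.
  have := pi_gt0 R. lra.
- apply: continuous_in_subspaceT => y; rewrite inE /= in_itv /= => /andP[py yq].
  apply: continuousM; first exact: cvg_cst.
  apply: hh_cont; [exact: lt_le_trans up py | exact: le_lt_trans yq qv].
- split.
  + move=> y; rewrite in_itv /= => /andP[py yq].
    exact: (@ex_derive _ _ _ _ _ _ _ (dF y (lt_trans up py) (lt_trans yq qv))).
  + apply: cvg_at_right_filter; exact: Fc (lt_trans pq qv).
  + apply: cvg_at_left_filter; exact: Fc (lt_trans up pq) qv.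
- move=> y; rewrite in_itv /= => /andP[py yq].
  rewrite derive1E; exact: (@derive_val _ _ _ _ _ _ _ (dF y (lt_trans up py) (lt_trans yq qv))).
Qed.

Lemma hh_ge0 {R : realType} (u v x : R) : 0 <= hh u v x.
Proof. by rewrite /hh invr_ge0 sqrtr_ge0. Qed.

Lemma int_hh_cc {R : realType} (u v M : R) : 0 <= M -> u < v ->
  (\int[lebesgue_measure]_(x in `[u, v]) (M * hh u v x)%:E <= (M * pi)%:E)%E.
Proof.
move=> M0 uv.
have w0 : 0 < v - u by rewrite subr_gt0.
pose e (n : nat) : R := (v - u) / (n.+3)%:R.
have e0 n : 0 < e n by apply: divr_gt0.
have e2 n : 2 * e n < v - u.
  have n3 : (3:R) <= (n.+3)%:R by rewrite ler_nat.
  rewrite /e mulrA ltr_pdivrMr; last lra.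
  nra.
have ed n m : (n <= m)%N -> e m <= e n.
  by move=> nm; rewrite /e ler_pM2l // lef_pV2 ?posrE ?ltr0n // ler_nat !ltnS.
pose f := fun y : R => (M * hh u v y)%:E.
pose g' : nat -> R -> \bar R := fun n => f \_ (`[u + e n, v - e n] : set R).
have hsub : forall k, `[u + e k, v - e k] `<=` `[u, v].
  move=> k y /=; rewrite !in_itv /= => /andP[h1 h2].
  have ek := e0 k; apply/andP; split; lra.
have mg' : forall k, measurable_fun `[u, v] (g' k).
  move=> k; rewrite /g'.
  apply: (measurable_restrict f (measurable_itv `[u + e k, v - e k]%R) (measurable_itv `[u, v]%R)).1.
  rewrite setIidr; last exact: hsub.
  apply/measurable_EFinP.
  apply: (@subspace_continuous_measurable_fun R `[u + e k, v - e k] (fun x => M * hh u v x)) => //.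
  apply: continuous_in_subspaceT => y; rewrite inE /= in_itv /= => /andP[py yq].
  apply: continuousM; first exact: cvg_cst.
  have ek := e0 k; apply: hh_cont; lra.
have g'0 : forall k x, `[u, v]%classic x -> (0 <= g' k x)%E.
  move=> k x _; rewrite /g' /patch; case: ifP => //= _.
  by rewrite lee_fin mulr_ge0 // hh_ge0.
have nd : forall x, `[u, v]%classic x -> {homo g'^~ x : n m / (n <= m)%N >-> (n <= m)%E}.
  move=> x _ n m nm; rewrite /g' /patch; case: ifPn => [/set_mem xin|_].
    rewrite ifT //; apply/mem_set; move: xin; rewrite /= !in_itv /= => /andP[h1 h2].
    have := ed n m nm => h3; apply/andP; split; lra.
  by case: ifP => //= _; rewrite lee_fin mulr_ge0 // hh_ge0.
have evE : forall d : R, 0 < d -> exists N, forall n, (N <= n)%N -> e n <= d.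
  move=> d d0; exists (Num.trunc ((v - u) / d)) => n Nn.
  have h1 := truncnS_gt ((v - u) / d).
  have h2 : (Num.trunc ((v - u) / d)).+1%:R <= n.+3%:R :> R.
    by rewrite ler_nat; apply: leq_trans (leqnSn _); rewrite ltnS; apply: leq_trans (leqnSn _).
  have n3 : 0 < n.+3%:R :> R by rewrite ltr0n.
  rewrite /e ler_pdivrMr // -ler_pdivrMl //.
  rewrite mulrC; lra.
have lim : forall x, `[u, v]%classic x -> limn (g'^~ x) = f x.
  move=> x; rewrite /= in_itv /= => /andP[ux xv].
  have [/andP[ux' xv']|bd] := boolP ((u < x) && (x < v)).
    have d0 : 0 < Num.min (x - u) (v - x) by rewrite lt_min !subr_gt0 ux' xv'.
    have [N HN] := evE _ d0.
    apply: cvg_lim => //; apply: cvg_near_cst; exists N => // n /= Nn.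
    rewrite /g' /patch ifT //; apply/mem_set; rewrite /= in_itv /=.
    have := HN n Nn; rewrite le_min => /andP[h1 h2]; apply/andP; split; lra.
  have fx : f x = 0%E.
    rewrite /f /hh; move: bd; rewrite negb_and -!leNgt => /orP[xu|vx].
      have -> : x = u by apply/eqP; rewrite eq_le xu ux.
      by rewrite subrr mul0r sqrtr0 invr0 mulr0.
    have -> : x = v by apply/eqP; rewrite eq_le xv vx.
    by rewrite subrr mulr0 sqrtr0 invr0 mulr0.
  rewrite fx; apply: cvg_lim => //; apply: cvg_near_cst; exists 0%N => // n _.
  rewrite /g' /patch ifF //; apply/negbTE/negP => /set_mem; rewrite /= in_itv /=.
  move=> /andP[h1 h2]; have := e0 n; move: bd; rewrite negb_and -!leNgt => /orP[] ?; lra.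
have -> : (\int[lebesgue_measure]_(x in `[u, v]) (M * hh u v x)%:E =
    \int[lebesgue_measure]_(x in `[u, v]) limn (g'^~ x))%E.
  by apply: eq_integral => x /set_mem xin; rewrite lim.
rewrite monotone_convergence //.
apply: lime_le.
  apply: ereal_nondecreasing_is_cvgn => n m nm.
  apply: le_int_nm => x xin; [exact: g'0 | exact: nd].
apply: nearW => n.
rewrite /g' -integral_mkcondr setIidr; last exact: hsub.
apply: ftc_piece => //; have := e2 n; have := e0 n; lra.
Qed.

Lemma int_hh {R : realType} (u v M : R) : 0 <= M ->
  (\int[lebesgue_measure]_(x in `[u, v]) (M * hh u v x)%:E <= (M * pi)%:E)%E.
Proof.
move=> M0; have Mp : (0 <= (M * pi)%:E)%E by rewrite lee_fin mulr_ge0 // pi_ge0.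
case: (ltrP u v) => [uv|]; first exact: int_hh_cc.
rewrite le_eqVlt => /predU1P[->|vu].
  by rewrite set_itv1 integral_set1.
rewrite set_itv_ge ?integral_set0 //.
by rewrite bnd_simp -ltNge.
Qed.

Lemma pointwise {R : realType} (a K s : R) : 1 <= a -> 9 * a ^+ 4 + 2 <= K ->
  alphaK K a <= s <= gammaK K a ->
  integrandT K a s <= (4 * a / Num.sqrt K) * hh (alphaK K a) (gammaK K a) s.
Proof.
move=> a1 K0 /andP[sa sg].
have a0 : 0 < a by lra.
have an0 : a != 0 by rewrite gt_eqF.
have a2 : 1 <= a ^+ 2 by nra.
have a4 : a ^+ 4 = a ^+ 2 * a ^+ 2 by rewrite -exprD.
have Kp : 0 < K by nra.
set D := discr K a.
have hD : D = a ^+ 2 * (9 / 2 * a ^+ 2 - 9 / 2 + 4 * K).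
  by rewrite /D /discr /cA; field; exact: an0.
have D4 : 4 * K <= D by rewrite hD; nra.
have D0 : 0 <= D by lra.
have sK := sqrtr_ge0 K; have sD := sqrtr_ge0 D.
have sKK := sqr_sqrtr (ltW Kp); have sDD := sqr_sqrtr D0.
have sKp : 0 < Num.sqrt K by rewrite sqrtr_gt0.
have hsD : 2 * Num.sqrt K <= Num.sqrt D by nra.
have hsK3 : 3 * a ^+ 2 <= Num.sqrt K by nra.
set G := K * a ^+ 2 - cA a * a + 9 / 4.
have hG : G = a ^+ 2 * (K - 9 / 8) + 9 / 8 by rewrite /G /cA; field; exact: an0.
have GK : K <= G by rewrite hG; nra.
have G0 : 0 <= G by lra.
have gG : gammaK K a = Num.sqrt G by [].
have sGG := sqr_sqrtr G0.
have sG0 := sqrtr_ge0 G.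
have hsG : Num.sqrt K <= Num.sqrt G by nra.
have alE : alphaK K a = (3 - 3 * a ^+ 2 + Num.sqrt D) / 2 by [].
have beE : betaK K a = alphaK K a - Num.sqrt D by rewrite /betaK alE; field.
have al0 : 0 < alphaK K a by rewrite alE; lra.
rewrite gG in sg *.
set al := alphaK K a in sa al0 beE *.
set P := (s - al) * (Num.sqrt G - s).
set Q := (s - betaK K a) * (Num.sqrt G + s).
have P0 : 0 <= P by apply: mulr_ge0; lra.
have Q1 : Num.sqrt D * Num.sqrt G <= Q.
  rewrite /Q beE; apply: ler_pM; lra.
have QK : K <= Q by nra.
have X0 : 0 <= (s - al) * (s - betaK K a) by rewrite beE; apply: mulr_ge0; lra.
rewrite /integrandT -/al gG sGG.
have -> : G - s ^+ 2 = (Num.sqrt G - s) * (Num.sqrt G + s) by rewrite -{1}sGG; ring.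
rewrite -sqrtrM //.
rewrite (_ : (s - al) * (s - betaK K a) *
     ((Num.sqrt G - s) * (Num.sqrt G + s)) = P * Q); last by rewrite /P /Q; ring.
rewrite sqrtrM // /hh -/P.
have sQp : 0 < Num.sqrt Q by rewrite sqrtr_gt0; lra.
have c0 : 0 <= 4 * a * (Num.sqrt P)^-1 by apply: mulr_ge0; [lra | rewrite invr_ge0 sqrtr_ge0].
rewrite (_ : 4 * a / (Num.sqrt P * Num.sqrt Q) = 4 * a * (Num.sqrt P)^-1 * (Num.sqrt Q)^-1); last first.
  by rewrite invfM mulrA.
rewrite (_ : 4 * a / Num.sqrt K * (Num.sqrt P)^-1 = 4 * a * (Num.sqrt P)^-1 * (Num.sqrt K)^-1); last first.
  by rewrite -!mulrA (mulrC (Num.sqrt K)^-1).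
apply: ler_wpM2l => //.
rewrite lef_pV2 ?posrE // ler_sqrt //; lra.
Qed.

Theorem mainTheorem6 (R : realType) (a : R) :
  1 <= a <= Num.sqrt 3 ->
  periodT K a @[K --> +oo] --> 0%E.
Proof.
move=> /andP[a1 _].
have a0 : 0 < a by lra.
have pip := pi_gt0 R.
apply: (@squeeze_cvge _ _ _ _ (fun=> 0%E) _
  (fun K => ((4 * a / Num.sqrt K) * pi)%:E)); last 2 first.
- exact: cvg_cst.
- apply: cvg_EFin; first exact: nearW.
  apply/cvgrPdist_lt => e e0.
  near=> K.
  have K0 : (4 * a * pi / e) ^+ 2 < K by near: K; apply: nbhs_pinfty_gt; rewrite num_real.
  have Kp : 0 < K by apply: le_lt_trans K0; exact: sqr_ge0.
  have sKp : 0 < Num.sqrt K by rewrite sqrtr_gt0.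
  have c0 : 0 < 4 * a * pi / e by apply: divr_gt0 => //; apply: mulr_gt0 => //; lra.
  have sK : 4 * a * pi / e < Num.sqrt K.
    have := sqr_sqrtr (ltW Kp); have := sqrtr_ge0 K; nra.
  rewrite /= sub0r normrN gtr0_norm; last by apply: mulr_gt0 => //; apply: divr_gt0 => //; lra.
  move: sK; rewrite ltr_pdivrMr // => sK.
  rewrite mulrAC ltr_pdivrMr //; lra.
near=> K.
have K0 : 9 * a ^+ 4 + 2 <= K by near: K; apply: nbhs_pinfty_ge; rewrite num_real.
have M0 : 0 <= 4 * a / Num.sqrt K by apply: divr_ge0; [lra | exact: sqrtr_ge0].
have int0 : forall s, (0 <= (integrandT K a s)%:E)%E.
  move=> s; rewrite lee_fin /integrandT; apply: divr_ge0; first lra.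
  by apply: mulr_ge0; exact: sqrtr_ge0.
apply/andP; split.
  by rewrite /periodT; apply: integral_ge0 => s _.
rewrite /periodT.
apply: le_trans _ (int_hh (alphaK K a) (gammaK K a) _ M0).
apply: le_int_nm => s hs; first exact: int0.
rewrite lee_fin; apply: pointwise => //.
Unshelve. all: by end_near.
Qed.
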